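(* Let $n\ge1$ and $\pi\in\mathfrak B_n$ with $\pi_1>0$ (resp. $\pi_1<0$). Then for every $T\in\mathrm{Orb}^*(T_\pi)$, writing $w(T)=0\sigma_1\cdots\sigma_n$, one has $\sigma_1>0$ (resp. $\sigma_1<0$).
   Context: $\mathfrak B_n$ is the set of signed permutations $\pi=\pi_1\cdots\pi_n$ (words over $\{\pm1,\dots,\pm n\}$ with $|\pi_1|,\dots,|\pi_n|$ a permutation of $[n]$), compared as integers; set $\pi_0=0$. Trees are rooted binary trees with each child designated left or right. A min–max tree is labeled bijectively by a totally ordered set so that each node's label is the minimum or maximum of its subtree's labels. A node with a child is inner; an inner node is a min-node (resp. max-node) if its label is the minimum (resp. maximum) of its subtree. An HR-tree is a min–max tree in which every inner node $s$ has a nonempty right subtree containing the maximum label of the subtree of $s$ if $s$ is a min-node, the minimum if $s$ is a max-node. The reading word is the in-order reading $w(T)=w(L)\,\ell_{\mathrm{root}}\,w(R)$. $\mathcal{BHR}_n$ is the set of HR-trees with label set $\{0,s_1,\dots,s_n\}$, $s_i\in\{i,-i\}$, such that $0$ is the first letter of $w(T)$; $T\mapsto w(T)=0\pi_1\cdots\pi_n$ is a bijection $\mathcal{BHR}_n\to\mathfrak B_n$ and $T_\pi$ is the tree with $w(T_\pi)=0\pi$. Modified HR-action: for $i\in[n]$ and $T_\pi\in\mathcal{BHR}_n$, let $v$ be the node labeled $\pi_i$. If $v$ is a leaf, or if the node labeled $0$ is a leaf whose parent is $v$, then $\widehat\psi_i(T_\pi)=T_\pi$. Otherwise, let $R$ consist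 of $\pi_i$ and the labels of the right subtree of $v$; relabel $v$ and its right subtree, keeping the shape, so that $v$ receives $\max R$ if $v$ is a min-node and $\min R$ if $v$ is a max-node, the right subtree nodes receiving the remaining elements of $R$ by the order-preserving bijection from their old labels; all other labels are unchanged. The $\widehat\psi_i$ are commuting involutions on $\mathcal{BHR}_n$, and $\mathrm{Orb}^*(T)$ is the set of trees obtained from $T$ by compositions of the $\widehat\psi_i$, $i\in[n]$. *)

(* Defs.v *)
From HB Require Import structures.
From mathcomp Require Import all_boot all_order all_algebra.
Set Implicit Arguments. Unset Strict Implicit. Unset Printing Implicit Defensive.
Import Order.TTheory GRing.Theory Num.Theory.
Local Open Scope ring_scope.

(* Rooted binary trees with integer labels; [Leaf] is the EMPTY tree,
   a "leaf node" of the paper is [Node Leaf x Leaf]. *)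
Inductive tree := Leaf | Node of tree & int & tree.

Fixpoint word (t : tree) : seq int :=
  match t with Leaf => [::] | Node l x r => word l ++ x :: word r end.

Fixpoint subtrees (t : tree) : seq tree :=
  match t with Leaf => [::] | Node l x r => t :: subtrees l ++ subtrees r end.

Definition is_empty (t : tree) : bool := if t is Leaf then true else false.

Definition smin (s : seq int) : int := foldr Num.min (head 0 s) s.
Definition smax (s : seq int) : int := foldr Num.max (head 0 s) s.

Definition node_ok (t : tree) : bool :=
  match t with
  | Leaf => true
  | Node l x r =>
      let L := word t in
      ((x == smin L) || (x == smax L)) &&
      ((~~ is_empty l || ~~ is_empty r) ==>
        (~~ is_empty r &&
         (if x == smin L then smax L \in word r else smin L \in word r)))
  end.

Definition hr_tree (t : tree) : bool :=
  uniq (word t) && all node_ok (subtrees t).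

(* BHR_n: labels {0, s_1, ..., s_n} with s_i = +-i, and 0 first in w(T) *)
Definition BHR (n : nat) (t : tree) : bool :=
  [&& hr_tree t, perm_eq [seq absz x | x <- word t] (iota 0 n.+1)
    & head 1 (word t) == 0].

Definition signed_perm (n : nat) (pi : seq int) : bool :=
  perm_eq [seq absz x | x <- pi] (iota 1 n).

Fixpoint map_tree (f : int -> int) (t : tree) : tree :=
  match t with Leaf => Leaf | Node l x r => Node (map_tree f l) (f x) (map_tree f r) end.

Definition is_zero_leaf (t : tree) : bool :=
  match t with Node Leaf z Leaf => z == 0 | _ => false end.

Definition psi_node (l : tree) (x : int) (r : tree) : tree :=
  if is_empty l && is_empty r then Node l x r
  else if is_zero_leaf l || is_zero_leaf r then Node l x r
  else
    let R := x :: word r in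
    let ismin := x == smin (word (Node l x r)) in
    let newv := if ismin then smax R else smin R in
    let oldsorted := sort <=%R (word r) in
    let newsorted := sort <=%R (rem newv R) in
    let f := fun y => nth 0 newsorted (index y oldsorted) in
    Node l newv (map_tree f r).

Fixpoint psi_at (a : int) (t : tree) : tree :=
  match t with
  | Leaf => Leaf
  | Node l x r => if x == a then psi_node l x r else Node (psi_at a l) x (psi_at a r)
  end.

(* modified HR-action psi^_i : v is the node labelled pi_i, where w(T) = 0 pi *)
Definition psi_hat (i : nat) (t : tree) : tree := psi_at (nth 0 (word t) i) t.

Inductive orb (n : nat) (T : tree) : tree -> Prop :=
  | orb_refl : orb n T T
  | orb_step : forall T' i, orb n T T' -> (1 <= i <= n)%N -> orb n T (psi_hat i T').

(* Main.v *)
Require Import Defs.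
From HB Require Import structures.
From mathcomp Require Import all_boot all_order all_algebra.
Import Order.TTheory GRing.Theory Num.Theory.
Local Open Scope ring_scope.

Lemma word_map_tree f t : word (map_tree f t) = map f (word t).
Proof. by elim: t => //= l IHl x r IHr; rewrite IHl IHr map_cat. Qed.

Lemma is_empty_map f t : is_empty (map_tree f t) = is_empty t.
Proof. by case: t. Qed.

Lemma foldr_max_mem (s : seq int) d : foldr Num.max d s \in d :: s.
Proof.
elim: s => [|y s IH] /=; first by rewrite mem_seq1.
rewrite /Num.max /Order.max; case: ifP => _.
  by move: IH; rewrite !inE => /orP [->|->]; rewrite ?orbT.
by rewrite !inE eqxx orbT.
Qed.

Lemma foldr_min_mem (s : seq int) d : foldr Num.min d s \in d :: s.
Proof.
elim: s => [|y s IH] /=; first by rewrite mem_seq1.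
rewrite /Num.min /Order.min; case: ifP => _.
  by rewrite !inE eqxx orbT.
by move: IH; rewrite !inE => /orP [->|->]; rewrite ?orbT.
Qed.

Lemma smax_mem (s : seq int) : s != [::] -> smax s \in s.
Proof.
case: s => // y s _; have := foldr_max_mem (y :: s) (head 0 (y :: s)).
by rewrite /smax /= !inE => /orP [->|]; rewrite ?eqxx.
Qed.

Lemma smin_mem (s : seq int) : s != [::] -> smin s \in s.
Proof.
case: s => // y s _; have := foldr_min_mem (y :: s) (head 0 (y :: s)).
by rewrite /smin /= !inE => /orP [->|]; rewrite ?eqxx.
Qed.

Lemma foldr_min_le (s : seq int) d y : y \in s -> foldr Num.min d s <= y.
Proof.
elim: s => // z s IH; rewrite inE /= => /orP [/eqP->|/IH H].
  by rewrite ge_min lexx.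
by rewrite ge_min H orbT.
Qed.

Lemma foldr_max_ge (s : seq int) d y : y \in s -> y <= foldr Num.max d s.
Proof.
elim: s => // z s IH; rewrite inE /= => /orP [/eqP->|/IH H].
  by rewrite le_max lexx.
by rewrite le_max H orbT.
Qed.

Lemma psi_nodeP l x r : exists x' r', psi_node l x r = Node l x' r' /\
  {subset x' :: word r' <= x :: word r} /\ is_empty r' = is_empty r /\
  size (word r') = size (word r).
Proof.
rewrite /psi_node; case: ifP => _; first by exists x, r; split => //; split => //; split => //.
case: ifP => _; first by exists x, r; split => //; split => //; split => //.
set R := x :: word r.
set nv := (if _ then _ else _).
have nvR : nv \in R.
  by rewrite /nv; case: ifP => _; [apply: smax_mem | apply: smin_mem].
eexists nv, _; split; first reflexivity; split; last by rewrite is_empty_map word_map_tree size_map.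
move=> y; rewrite inE => /orP [/eqP->//|].
rewrite word_map_tree => /mapP [z zr ->].
have Hsz : size (sort <=%R (rem nv R)) = size (sort <=%R (word r)).
  by rewrite !size_sort size_rem.
have : nth 0 (sort <=%R (rem nv R)) (index z (sort <=%R (word r))) \in
    sort <=%R (rem nv R).
  by apply: mem_nth; rewrite Hsz index_mem mem_sort.
by rewrite mem_sort => /mem_rem.
Qed.

Lemma psi_atP a t : {subset word (psi_at a t) <= word t} /\
  size (word (psi_at a t)) = size (word t) /\ is_empty (psi_at a t) = is_empty t.
Proof.
elim: t => [|l [IHl1 [IHl2 IHl3]] x r [IHr1 [IHr2 IHr3]]] //=.
case: ifP => _.
  have [x' [r' [-> [Hs [He Hz]]]]] := psi_nodeP l x r.
  rewrite /= !size_cat /= Hz; split => //.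
  move=> y; rewrite !mem_cat => /orP [->//|H]; by rewrite (Hs _ H) orbT.
rewrite /= !size_cat /= IHl2 IHr2; split => //.
move=> y; rewrite !mem_cat !inE => /or3P [/IHl1 ->//|->|/IHr1 ->]; by rewrite ?orbT.
Qed.

Fixpoint zsub (t : tree) : option tree :=
  match t with Leaf => None | Node l x r => if is_empty l then Some t else zsub l end.
Fixpoint zpar (t : tree) : option int :=
  match t with Leaf => None | Node l x r => if is_zero_leaf l then Some x else zpar l end.

Lemma zsub_psi a t r : a != 0 -> zsub t = Some (Node Leaf 0 r) ->
  exists r', zsub (psi_at a t) = Some (Node Leaf 0 r') /\
    {subset word r' <= word r} /\ is_empty r' = is_empty r.
Proof.
move=> a0; elim: t => [|l IHl x r0 _] //=.
case: l IHl => [|l1 y r1] IHl /=.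
  case=> -> ->; rewrite eq_sym (negbTE a0) /=.
  have [H1 [_ H3]] := psi_atP a r; by exists (psi_at a r); split => //; split.
move=> Hz; case: ifP => _.
  have [x' [r' [-> _]]] := psi_nodeP (Node l1 y r1) x r0; by exists r; split => //; split.
have [r' [H1 H2]] := IHl Hz; exists r'; split => //.
have [_ [_ He]] := psi_atP a (Node l1 y r1); move: He H1.
set u := (if y == a then _ else _); change u with (psi_at a (Node l1 y r1)).
by case: (psi_at a (Node l1 y r1)).
Qed.

Lemma zpar_psi a t c : a != 0 -> zpar t = Some c -> zpar (psi_at a t) = Some c.
Proof.
move=> a0; elim: t => [|l IHl x r0 _] //=.
case Hl: (is_zero_leaf l).
  case=> <-; case: l Hl IHl => [|[] z [] ] //= /eqP -> _.
  case: ifP => _; first by rewrite /psi_node /=.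
  by rewrite eq_sym (negbTE a0).
move=> Hz; case: ifP => _.
  have [x' [r' [-> _]]] := psi_nodeP l x r0; by rewrite /= Hl.
have := IHl Hz; case Hp: (is_zero_leaf (psi_at a l)).
  by move: Hp; case: (psi_at a l) => [|[|? ? ?] z [|? ? ?] ].
change (zpar (Node (psi_at a l) x (psi_at a r0))) with (if is_zero_leaf (psi_at a l) then Some x else zpar (psi_at a l)).
by rewrite Hp.
Qed.

Lemma zsub_word t z r : zsub t = Some (Node Leaf z r) -> exists s, word t = z :: word r ++ s.
Proof.
elim: t => [|l IHl x r0 _] //=.
case: l IHl => [|l1 y r1] IHl /=; first by case=> -> ->; exists [::]; rewrite cats0.
move=> /IHl [s /= ->]; eexists; by rewrite /= -catA.
Qed.

Lemma zpar_word t c : zpar t = Some c -> exists s, word t = 0 :: c :: s.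
Proof.
elim: t => [|l IHl x r0 _] //=.
case Hl: (is_zero_leaf l).
  case=> <-; case: l Hl IHl => [|[] z [] ] //= /eqP -> _; by eexists.
by move=> /IHl [s ->]; eexists.
Qed.

Lemma zsub_exists t : t <> Leaf -> exists r, zsub t = Some (Node Leaf (head 0 (word t)) r).
Proof.
elim: t => [|l IHl x r0 _] //= _.
case: l IHl => [|l1 y r1] IHl /=; first by exists r0.
have [r Hr] := IHl ltac:(by []); move: Hr.
move: (head 0 (word (Node l1 y r1))) => z Hr.
have [s Hs] := zsub_word _ _ _ Hr; exists r; move: Hr Hs => /= -> ->; by [].
Qed.

Lemma zsub_all P t u : all P (subtrees t) -> zsub t = Some u -> P u.
Proof.
elim: t => [|l IHl x r0 _] //= /andP [Pt]; rewrite all_cat => /andP [Hl _].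
case: ifP => _; first by case=> <-.
exact: IHl.
Qed.

Lemma zpar_of t : zsub t = Some (Node Leaf 0 Leaf) ->
  t = Node Leaf 0 Leaf \/ exists c, zpar t = Some c.
Proof.
elim: t => [|l IHl x r0 _] //=.
case: l IHl => [|l1 y r1] IHl /=; first by case=> -> ->; left.
move=> /IHl [[-> -> ->]|[c Hc]]; right; first by exists x.
case: ifP => _; [by eexists | by exists c].
Qed.

Definition Qp (p : int -> bool) (t : tree) : Prop :=
  (exists r, zsub t = Some (Node Leaf 0 r) /\ ~~ is_empty r /\ all p (word r)) \/
  (exists c, zpar t = Some c /\ p c).

Lemma Qp_nth1 p t : Qp p t -> p (nth 0 (word t) 1).
Proof.
case=> [[r [/zsub_word [s ->] [Hr Ha]]]|[c [/zpar_word [s ->] //]]].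
case: r Hr Ha => // l x r _ /= Ha.
apply: (allP Ha); case: (word l) => [|y w] /=; by rewrite !inE ?eqxx ?orbT.
Qed.

Lemma Qp_psi p a t : a != 0 -> Qp p t -> Qp p (psi_at a t).
Proof.
move=> a0 [[r [Hz [Hr Ha]]]|[c [Hc Hp]]].
  have [r' [H1 [H2 H3]]] := zsub_psi _ _ _ a0 Hz; left; exists r'; split => //.
  rewrite H3; split => //; apply/allP => y /H2; exact: (allP Ha).
right; exists c; split => //; exact: (zpar_psi _ _ _ a0).
Qed.

Lemma head0_psi a t s : a != 0 -> word t = 0 :: s -> 0 \notin s ->
  exists s', word (psi_at a t) = 0 :: s' /\ 0 \notin s'.
Proof.
move=> a0; elim: t s => [|l IHl x r IHr] s //=.
case: (boolP (is_empty l)) => El.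
  have El' : l = Leaf by case: l El {IHl}.
  subst l => /=.
  case=> -> <- H; rewrite eq_sym (negbTE a0) /=; exists (word (psi_at a r)); split => //.
  apply/negP => /(proj1 (psi_atP a r)); by rewrite (negbTE H).
case Hw: (word l) => [|z w]; first by case: l El Hw {IHl} => //= l1 y r1 _; case: (word l1).
case=> zE sE; subst z s.
rewrite mem_cat inE !negb_or => /andP [Hw0 /andP [x0 r0]].
case: ifP => _.
  have [x' [r' [-> [Hs _]]]] := psi_nodeP l x r.
  rewrite /= Hw /=; eexists; split; first reflexivity.
  rewrite mem_cat negb_or Hw0 /=; apply/negP => /Hs; rewrite inE; apply/negP; rewrite negb_or; apply/andP; split => //.
have [s' [Hs' Hn]] := IHl w Hw Hw0.
rewrite /= Hs' /=; eexists; split; first reflexivity.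
apply/negP; rewrite mem_cat inE => /or3P [H|H|/(proj1 (psi_atP a r)) H].
- by rewrite H in Hn.
- by rewrite H in x0.
- by rewrite H in r0.
Qed.

Theorem mainTheorem9 (n : nat) (pi : seq int) (T : tree) :
  (1 <= n)%N -> signed_perm n pi -> BHR n T -> word T = 0 :: pi ->
  forall T' : tree, orb n T T' ->
    (0 < nth 0 pi 0 -> 0 < nth 0 (word T') 1) /\
    (nth 0 pi 0 < 0 -> nth 0 (word T') 1 < 0).
Proof.
move=> n1 Hsp /and3P [/andP [_ Hok] _ _] HwT.
have pi0 : 0 \notin pi.
  apply/negP => H0; have := map_f absz H0; by rewrite (perm_mem Hsp) mem_iota.
have szpi : size pi = n by rewrite -(size_iota 1 n) -(perm_size Hsp) size_map.
have Tnl : T <> Leaf by move=> E; rewrite E in HwT.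
have [r Hr] := zsub_exists _ Tnl; rewrite HwT /= in Hr.
have [s0 Hs0] := zsub_word _ _ _ Hr.
have rpi : {subset word r <= pi}.
  by move: Hs0; rewrite HwT => -[->] y Hy; rewrite mem_cat Hy.
have Hpi1 : ~~ is_empty r -> nth 0 pi 0 \in word r.
  move: Hs0; rewrite HwT => -[->]; case: r {Hr rpi} => //= l x r' _.
  by case: (word l) => [|z w] /=; rewrite !inE ?eqxx.
have Hsign : ~~ is_empty r ->
    all (fun y => 0 < y) (word r) \/ all (fun y => y < 0) (word r).
  move=> _; have := zsub_all _ _ _ Hok Hr; rewrite /node_ok /= => /andP [H _].
  case/orP: H => /eqP E; [left|right]; apply/allP => y Hy;
    have y0 : y != 0 by apply/negP => /eqP E0; move: (rpi _ Hy); rewrite E0 (negbTE pi0).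
  - rewrite lt_neqAle eq_sym y0 E /=; apply: foldr_min_le; by rewrite inE Hy orbT.
  - rewrite lt_neqAle y0 E /=; apply: foldr_max_ge; by rewrite inE Hy orbT.
have init : forall p : int -> bool, p (nth 0 pi 0) ->
    (~~ is_empty r -> all p (word r)) -> Qp p T.
  move=> p Hp Ha; case E: (is_empty r); last first.
    by left; exists r; rewrite E; split => //; split => //; apply: Ha; rewrite E.
  have Er : r = Leaf by case: r E {Hr rpi Hpi1 Hsign Ha s0 Hs0}.
  rewrite Er in Hr; case: (zpar_of _ Hr) => [ET|[c Hc]].
    by move: HwT; rewrite ET => -[E']; move: n1; rewrite -szpi -E'.
  right; exists c; split => //.
  have [s Hs] := zpar_word _ _ Hc; move: Hs; rewrite HwT => -[Epi]; by rewrite Epi in Hp.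
have inv : forall p, Qp p T -> forall T', orb n T T' ->
    Qp p T' /\ exists s, [/\ word T' = 0 :: s, 0 \notin s & size s = n].
  move=> p HQ T' HT'; elim: HT' => [|T2 i _ [IHQ [s [Hs Hn Hz]]] Hi].
    by split => //; exists pi.
  rewrite /psi_hat Hs.
  case: i Hi => // i; rewrite /= => Hi.
  have a0 : nth 0 s i != 0.
    apply/negP => /eqP E; move: Hn; rewrite -E mem_nth // Hz //.
  split; first exact: Qp_psi.
  have [s' [Hs' Hn']] := head0_psi _ _ _ a0 Hs Hn; exists s'; split => //.
  have [_ [Hsz _]] := psi_atP (nth 0 s i) T2.
  by move: Hsz; rewrite Hs' Hs /= => -[->].
move=> T' HT'; split => Hp.
  have HQ : Qp (fun y => 0 < y) T.
    apply: init => // Hne; case: (Hsign Hne) => // Hn.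
    by have := allP Hn _ (Hpi1 Hne); rewrite ltNge (ltW Hp).
  exact: (Qp_nth1 _ _ (proj1 (inv _ HQ T' HT'))).
have HQ : Qp (fun y => y < 0) T.
  apply: init => // Hne; case: (Hsign Hne) => // Hn.
  by have := allP Hn _ (Hpi1 Hne); rewrite /= ltNge (ltW Hp).
exact: (Qp_nth1 _ _ (proj1 (inv _ HQ T' HT'))).
Qed.
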